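(* Let $G$ be a group, $E$ a real Banach space, and $f\in KJ(G;E)$. For $m\ge 2$ let $\varphi_m(x)=\lim_{k\to\infty}\frac{1}{m^k}f(x^{m^k})$. Then $\varphi_2=\varphi_m$ for every $m\ge 2$.
   Context: $KJ(G;E)$ is the space of functions $f\colon G\to E$ for which there exists $c>0$ with $\|f(xy)+f(xy^{-1})-2f(x)\|\le c$ for all $x,y\in G$. For $f\in KJ(G;E)$ and $m\ge2$ the limit defining $\varphi_m(x)$ exists in $E$ for every $x\in G$. *)

(* Defs.v *)
From HB Require Import structures.
From mathcomp Require Import all_boot all_order all_algebra.
From mathcomp Require Import all_classical all_reals all_analysis.
Set Implicit Arguments. Unset Strict Implicit. Unset Printing Implicit Defensive.
Import Order.TTheory GRing.Theory Num.Theory.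
Import numFieldNormedType.Exports.
Local Open Scope classical_set_scope.
Local Open Scope ring_scope.

Definition KJ (R : realType) (G : groupType) (E : normedModType R)
    (f : G -> E) : Prop :=
  exists c : R, 0 < c /\
    forall x y : G, `|f (x * y)%g + f (x * y^-1)%g - 2 *: f x| <= c.

Definition phi (R : realType) (G : groupType) (E : normedModType R)
    (f : G -> E) (m : nat) (x : G) : E :=
  lim ((fun k : nat => ((m ^ k)%N%:R : R)^-1 *: f (x ^+ (m ^ k))%g) @ \oo).

(* Main.v *)
Require Import Defs.
From HB Require Import structures.
From mathcomp Require Import all_boot all_order all_algebra.
From mathcomp Require Import all_classical all_reals all_analysis.
Import numFieldNormedType.Exports.
From mathcomp Require Import lra ring.
Set Implicit Arguments. Unset Strict Implicit. Unset Printing Implicit Defensive.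
Import Order.TTheory GRing.Theory Num.Theory.
Local Open Scope classical_set_scope.
Local Open Scope ring_scope.

Lemma zid (V : zmodType) (a b d p q o : V) : (a - p - q + o) *+ 2 = a + b - p *+ 2 + (a + d - q *+ 2) - (b + d - o *+ 2).
Proof.
have -> : a + b - p *+ 2 = (a - p *+ 2) + b by rewrite addrAC.
have -> : a + d - q *+ 2 = (a - q *+ 2) + d by rewrite addrAC.
rewrite addrACA opprB (addrC (o *+ 2)) (addrA _ (- (b + d))) addrK.
rewrite !mulr2n !opprD !addrA. rewrite (ACl (1*2*6*5*3*7*4*8)). by []. Qed.

Lemma approx_add (R : realType) (G : groupType) (E : normedModType R)
  (f : G -> E) (c : R) (hc : forall x y : G, `|f (x * y)%g + f (x * y^-1)%g - 2 *: f x| <= c)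
  (p q : G) : commute p q -> `|f (p * q)%g - f p - f q + f 1%g| <= 3 * c.
Proof.
move=> pq.
have h1 := hc p q. have h2 := hc q p. have h3 := hc 1%g (p * q^-1)%g.
rewrite !mul1g invgM invgK in h3. rewrite -pq in h2.
have e : (2:R) *: (f (p * q)%g - f p - f q + f 1%g) =
  (f (p * q)%g + f (p * q^-1)%g - 2 *: f p) + (f (p * q)%g + f (q * p^-1)%g - 2 *: f q)
  - (f (p * q^-1)%g + f (q * p^-1)%g - 2 *: f 1%g).
  by rewrite !scaler_nat (zid _ (f (p / q)%g) (f (q / p)%g)).
have : `|(2:R) *: (f (p * q)%g - f p - f q + f 1%g)| <= 3 * c.
  rewrite e; apply: (le_trans (ler_normB _ _)).
  apply: (le_trans (lerD (ler_normD _ _) (lexx _))). apply: le_trans (lerD (lerD h1 h2) h3) _; lra.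
rewrite normrZ ger0_norm //. 
have := normr_ge0 (f (p * q)%g - f p - f q + f 1%g). lra.
Qed.

Lemma hmul (R : realType) (E : normedModType R) (h : nat -> E) (K : R) :
  (forall a b, `|h (a + b)%N - h a - h b| <= K) ->
  forall n a, `|h (n * a)%N - n%:R *: h a| <= n.+1%:R * K.
Proof.
move=> hK; elim=> [|n IH] a.
  rewrite mul0n scale0r subr0 mul1r.
  by have := hK 0%N 0%N; rewrite addn0 subrr sub0r normrN.
rewrite mulSn -nat1r mulrDl mul1r.
have -> : h (a + n * a)%N - (1 + n%:R) *: h a = (h (a + n * a)%N - h a - h (n * a)%N) + (h (n * a)%N - n%:R *: h a).
  by rewrite scalerDl scale1r opprD addrA [RHS]addrA subrK.
by apply: le_trans (ler_normD _ _) _; apply: lerD.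
Qed.

Lemma l3 (R : realType) (p q K : R) : p != 0 -> q != 0 -> p^-1 * q^-1 * ((p + 1) * K + (q + 1) * K) = q^-1 * K + p^-1 * K + 2 * (p^-1 * q^-1 * K).
Proof. move=> p0 q0. field. by rewrite p0 q0. Qed.

Lemma key (R : realType) (E : normedModType R) (h : nat -> E) (w : E) (K : R) :
  (forall a b, `|h (a + b)%N - h a - h b| <= K) ->
  forall P Q : nat, (0 < P)%N -> (0 < Q)%N ->
  `|P%:R^-1 *: (h P + w) - Q%:R^-1 *: (h Q + w)| <= (2 * K + `|w|) * (P%:R^-1 + Q%:R^-1).
Proof.
move=> hK P Q hP hQ.
have K0 : 0 <= K by apply: le_trans (hK 0%N 0%N).
have A := hmul hK P Q. have B := hmul hK Q P. rewrite mulnC in A.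
have C : `|Q%:R *: h P - P%:R *: h Q| <= P.+1%:R * K + Q.+1%:R * K.
  have -> : Q%:R *: h P - P%:R *: h Q = (h (Q * P)%N - P%:R *: h Q) - (h (Q * P)%N - Q%:R *: h P).
    by rewrite opprB [RHS]addrC [RHS]addrA subrK.
  by apply: le_trans (ler_normB _ _) _; apply: lerD.
set p : R := P%:R. set q : R := Q%:R.
have p1 : 1 <= p by rewrite /p ler1n.
have q1 : 1 <= q by rewrite /q ler1n.
have p0 : p != 0 by rewrite gt_eqF // (lt_le_trans ltr01).
have q0 : q != 0 by rewrite gt_eqF // (lt_le_trans ltr01).
have -> : p^-1 *: (h P + w) - q^-1 *: (h Q + w) = (p^-1 * q^-1) *: (q *: h P - p *: h Q) + (p^-1 - q^-1) *: w.
  rewrite scalerBr !scalerA scalerBl.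
  rewrite mulfVK // [p^-1 * q^-1]mulrC mulfVK //.
  by rewrite !scalerDr opprD !addrA (ACl (1*3*2*4)).
apply: le_trans (ler_normD _ _) _.
rewrite !normrZ.
have ip0 : 0 < p^-1 by rewrite invr_gt0 (lt_le_trans ltr01).
have iq0 : 0 < q^-1 by rewrite invr_gt0 (lt_le_trans ltr01).
have ip1 : p^-1 <= 1 by rewrite invf_le1 // (lt_le_trans ltr01).
have iq1 : q^-1 <= 1 by rewrite invf_le1 // (lt_le_trans ltr01).
have D : `|p^-1 - q^-1| <= p^-1 + q^-1.
  by apply: le_trans (ler_normB _ _) _; rewrite !gtr0_norm.
rewrite (gtr0_norm ip0) (gtr0_norm iq0).
have pp : p^-1 * p = 1 by rewrite mulVf.
have qq : q^-1 * q = 1 by rewrite mulVf.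
have W := normr_ge0 w.
have N := normr_ge0 (q *: h P - p *: h Q).
rewrite -/p -/q in C.
have e2 : P.+1%:R = p + 1 by rewrite /p -natr1.
have e3 : Q.+1%:R = q + 1 by rewrite /q -natr1.
rewrite e2 e3 in C.
clearbody p q.
have L1 : p^-1 * q^-1 * `|q *: h P - p *: h Q| <= p^-1 * q^-1 * ((p + 1) * K + (q + 1) * K).
  by apply: ler_wpM2l => //; apply: mulr_ge0; apply: ltW.
have L2 : `|p^-1 - q^-1| * `|w| <= (p^-1 + q^-1) * `|w| by apply: ler_wpM2r.
have L3 : p^-1 * q^-1 * ((p + 1) * K + (q + 1) * K) = q^-1 * K + p^-1 * K + 2 * (p^-1 * q^-1 * K).
  exact: l3.
have L4 : p^-1 * q^-1 * K <= q^-1 * K.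
  by apply: ler_wpM2r => //; apply: ler_piMl => //; apply: ltW.
have L5 : p^-1 * q^-1 * K <= p^-1 * K.
  by apply: ler_wpM2r => //; apply: ler_piMr => //; apply: ltW.
lra.
Qed.

Lemma invle (R : realType) (m k j : nat) : (2 <= m)%N -> (j <= k)%N ->
  ((m ^ k)%N%:R : R)^-1 <= ((2 ^ j)%N%:R : R)^-1.
Proof.
move=> hm hjk.
have m0 : (0 < m)%N by apply: leq_trans hm.
rewrite lef_pV2 ?posrE ?ltr0n ?expn_gt0 ?m0 //.
rewrite ler_nat (leq_trans (leq_pexp2l _ hjk)) //.
by case: k {hjk} => // k; rewrite leq_exp2r.
Qed.

Lemma Dcvg (R : realType) : (fun k : nat => ((2 ^ k)%N%:R : R)^-1) @ \oo --> 0.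
Proof.
have -> : (fun k : nat => ((2 ^ k)%N%:R : R)^-1) = GRing.exp (2^-1 : R).
  by apply: funext => k; rewrite natrX exprVn.
apply: cvg_expr; rewrite gtr0_norm ?invr_gt0 // invf_lt1 //; lra.
Qed.

Lemma Dev (R : realType) (e : R) : 0 < e -> exists N : nat, forall k, (N <= k)%N -> ((2 ^ k)%N%:R : R)^-1 <= e.
Proof.
move=> e0; have := (cvgr0Pnorm_le _).1 (@Dcvg R) e e0.
case=> N _ HN; exists N => k /HN /=.
by rewrite ger0_norm // invr_ge0.
Qed.

Lemma zid2 (V : zmodType) (u v z w : V) : (u - w) - (v - w) - (z - w) = u - v - z + w.
Proof. by rewrite !opprB !addrA subrK (ACl (1*2*4*3)). Qed.

Theorem lemma2p6 (R : realType) (G : groupType) (E : completeNormedModType R)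
    (f : G -> E) (hf : KJ f) (m : nat) (hm : (2 <= m)%N) :
  phi f 2 = phi f m.
Proof.
case: hf => c [c0 hc].
apply: funext => x; rewrite /phi.
pose h n := f (x ^+ n)%g - f 1%g.
have hK : forall a b, `|h (a + b)%N - h a - h b| <= 3 * c.
  move=> a b; rewrite /h zid2 expgnDr.
  exact: approx_add hc _ _ (commuteX2 a b (commute_refl x)).
pose C := 2 * (3 * c) + `|f 1%g|.
have C0 : 0 <= C by rewrite /C; have := normr_ge0 (f 1%g); lra.
pose s (m : nat) (k : nat) := ((m ^ k)%N%:R : R)^-1 *: f (x ^+ (m ^ k))%g.
have fh : forall n, f (x ^+ n)%g = h n + f 1%g by move=> n; rewrite /h subrK.
have bnd : forall m k j, (2 <= m)%N -> `|s m k - s 2%N j| <= C * (((m ^ k)%N%:R : R)^-1 + ((2 ^ j)%N%:R)^-1).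
  move=> m' k j hm'; rewrite /s !fh; apply: key => //.
  by rewrite expn_gt0 (leq_trans _ hm').
  by rewrite expn_gt0.
have cv2 : cvg (s 2%N @ \oo).
  apply/cauchy_cvgP; apply: cauchy_exP => e e0.
  have [N HN] := Dev (divr_gt0 e0 (ltr_wpDl (mulr_ge0 (ler0n _ 2) C0) ltr01)).
  exists (s 2%N N); exists N => // k /= Nk.
  rewrite -ball_normE /=.
  apply: le_lt_trans (bnd 2%N N k (leqnn 2)) _.
  have a1 := HN N (leqnn N).
  have a2 := invle R (leqnn 2) Nk.
  have d0 : 0 < ((2 ^ N)%N%:R : R)^-1 by rewrite invr_gt0 ltr0n expn_gt0.
  rewrite ler_pdivlMr in a1; last by have := mulr_ge0 (ler0n R 2) C0; lra.
  have a4 := ler_wpM2l C0 a2.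
  nra.
have cvm : s m @ \oo --> lim (s 2%N @ \oo).
  apply/cvgrPdist_le => e e0.
  have H1 := (cvgrPdist_le _ _).1 cv2 (e / 2) (divr_gt0 e0 (ltr0n R 2)).
  have [N HN] := Dev (divr_gt0 e0 (ltr_wpDl (mulr_ge0 (ler0n _ 4) C0) ltr01)).
  have H2 : \forall t \near \oo, `|s 2%N t - s m t| <= e / 2.
    exists N => // k /= Nk.
    rewrite distrC; apply: le_trans (bnd m k k hm) _.
    have a1 := HN k Nk.
    have a2 := invle R hm (leqnn k).
    have d0 : 0 < ((2 ^ k)%N%:R : R)^-1 by rewrite invr_gt0 ltr0n expn_gt0.
    rewrite ler_pdivlMr in a1; last by have := mulr_ge0 (ler0n R 4) C0; lra.
    have a4 := ler_wpM2l C0 a2.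
    nra.
  case: H1 => N1 _ H1; case: H2 => N2 _ H2.
  exists (maxn N1 N2) => // t /= Nt.
  have a := H1 t (leq_trans (leq_maxl _ _) Nt).
  have b := H2 t (leq_trans (leq_maxr _ _) Nt).
  rewrite /= in a b.
  by apply: le_trans (ler_distD (s 2%N t) _ _) _; lra.
by rewrite (cvg_lim _ cvm).
Qed.
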